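(* Let $G:\mathbb R^2\to\mathbb R^2$ be a linear operator, identified with a real $2\times 2$ matrix. Then $G$ is a grid operator if and only if it is of the form $G=\begin{bmatrix}a+\frac{a'}{\sqrt2}&b+\frac{b'}{\sqrt2}\\ c+\frac{c'}{\sqrt2}&d+\frac{d'}{\sqrt2}\end{bmatrix}$, where $a,b,c,d,a',b',c',d'$ are integers satisfying $a+b+c+d\equiv 0\pmod 2$ and $a'\equiv b'\equiv c'\equiv d'\pmod 2$.
   Context: Let $\omega=e^{i\pi/4}$ and $\mathbb Z[\omega]=\{a_0+a_1\omega+a_2\omega^2+a_3\omega^3 : a_j\in\mathbb Z\}\subseteq\mathbb C$, regarded as a subset of $\mathbb R^2$ via $x+iy\mapsto(x,y)$. A real linear operator $G:\mathbb R^2\to\mathbb R^2$ is a grid operator if $G(\mathbb Z[\omega])\subseteq\mathbb Z[\omega]$. *)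

(* Defs.v *)
From HB Require Import structures.
From mathcomp Require Import all_boot all_order all_algebra.
From mathcomp Require Import complex.
Set Implicit Arguments. Unset Strict Implicit. Unset Printing Implicit Defensive.
Import Order.TTheory GRing.Theory Num.Theory.
Local Open Scope ring_scope.

Section GridDefs.
Variable R : rcfType.

(* omega = e^{i pi/4} = sqrt2/2 + i sqrt2/2 *)
Definition omega : R[i] :=
  Complex (Num.sqrt 2 / 2) (Num.sqrt 2 / 2).

Definition zomega_elt (a0 a1 a2 a3 : int) : R[i] :=
  a0%:~R + a1%:~R * omega + a2%:~R * omega ^+ 2 + a3%:~R * omega ^+ 3.

Definition toR2 (z : R[i]) : 'cV[R]_2 :=
  \col_(k < 2) (if k == 0 :> nat then complex.Re z else complex.Im z).

Definition in_Zomega (v : 'cV[R]_2) : Prop :=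
  exists a0 a1 a2 a3 : int, v = toR2 (zomega_elt a0 a1 a2 a3).

Definition grid_operator (G : 'M[R]_2) : Prop :=
  forall v : 'cV[R]_2, in_Zomega v -> in_Zomega (G *m v).
End GridDefs.

(* Main.v *)
Require Import Defs.
From HB Require Import structures.
From mathcomp Require Import all_boot all_order all_algebra.
From mathcomp Require Import complex ring zify.
Import Order.TTheory GRing.Theory Num.Theory.
Local Open Scope ring_scope.
Section S.
Variable R : rcfType.
Lemma ss : Num.sqrt (2:R) * Num.sqrt 2 = 2.
Proof. by rewrite -expr2 sqr_sqrtr // ler0n. Qed.
Lemma s_neq0 : Num.sqrt (2:R) != 0.
Proof. by rewrite sqrtr_eq0 -ltNge ltr0n. Qed.
Lemma s2w : Num.sqrt (2:R) / 2 = (Num.sqrt 2)^-1.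
Proof. apply: (mulfI s_neq0). rewrite divff ?s_neq0 // mulrA ss divff //. by rewrite pnatr_eq0. Qed.
Lemma zomegaE a0 a1 a2 a3 : zomega_elt R a0 a1 a2 a3 =
  Complex (a0%:~R + (a1 - a3)%:~R / Num.sqrt 2) (a2%:~R + (a1 + a3)%:~R / Num.sqrt 2) :> R[i].
Proof.
rewrite /zomega_elt /omega -!(rmorph_int (real_complex R)).
rewrite !expr2 exprS expr2 s2w.
have ww : (Num.sqrt (2:R))^-1 * (Num.sqrt 2)^-1 = 2^-1 :> R by rewrite -invfM ss.
have h2 : 2^-1 + 2^-1 = 1 :> R by field.
apply/eqP; rewrite eq_complex /=. apply/andP; split; apply/eqP.
all: rewrite ?ww ?h2 ?rmorphB ?rmorphD /=.
all: ring.
Qed.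


Lemma int_sqrt2 (m n : int) : n * n = m * m * 2 -> m = 0.
Proof.
move=> h.
have hn : (`|n| * `|n| = `|m| * `|m| * 2)%N.
  by have := congr1 absz h; rewrite !abszM.
apply/eqP; rewrite -absz_eq0; apply/negPn/negP => m0.
have n0 : (`|n| != 0)%N.
  apply/negP=> /eqP n0; move: hn; rewrite n0 muln0 => /esym/eqP.
  by rewrite !muln_eq0 (negbTE m0).
have := congr1 (logn 2) hn.
rewrite !lognM ?muln_gt0 ?lt0n ?m0 ?n0 //.
rewrite (_ : logn 2 2 = 1) //.
move=> e; have := congr1 odd e; rewrite !oddD !addbb /=; done.
Qed.

Local Notation s := (Num.sqrt (2:R)).

Lemma inZ (v : 'cV[R]_2) : in_Zomega v <-> exists a0 a1 a2 a3 : int,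
  v 0 0 = a0%:~R + (a1-a3)%:~R / s /\ v 1 0 = a2%:~R + (a1+a3)%:~R / s.
Proof.
split.
  case=> a0 [a1 [a2 [a3 ->]]]; exists a0, a1, a2, a3.
  by rewrite /toR2 !mxE zomegaE.
case=> a0 [a1 [a2 [a3 [h0 h1]]]]; exists a0, a1, a2, a3.
apply/matrixP=> i j; rewrite ord1 /toR2 !mxE zomegaE.
case: i => [[|[|k]] Hi] //=.
  by have -> : Ordinal Hi = 0 by apply/val_inj.
by have -> : Ordinal Hi = 1 by apply/val_inj.
Qed.

Lemma mulmx2 (G : 'M[R]_2) (v : 'cV[R]_2) i :
  (G *m v) i 0 = G i 0 * v 0 0 + G i 1 * v 1 0.
Proof.
rewrite !mxE !big_ord_recl big_ord0 addr0.
by have -> : lift ord0 (ord0 : 'I_1) = 1 :> 'I_2 by apply/val_inj.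
Qed.

Lemma mulS (A B C D : R) :
  (A + B / s) * (C + D / s) = (A * C + B * D / 2) + (A * D + B * C) / s.
Proof.
have -> : (A + B / s) * (C + D / s) = A * C + B * D / (s * s) + (A * D + B * C) / s.
  by field; rewrite s_neq0.
by rewrite ss.
Qed.


Lemma irr (m n : int) : m%:~R + n%:~R / s = 0 -> m = 0 /\ n = 0.
Proof.
move=> h.
have h1 : n%:~R = - (m%:~R * s) :> R.
  apply/eqP; rewrite -subr_eq0 opprK; apply/eqP.
  have -> : n%:~R + m%:~R * s = (m%:~R + n%:~R / s) * s :> R.
    by field; rewrite s_neq0.
  by rewrite h mul0r.
have h2 : (n * n)%:~R = (m * m * 2)%:~R :> R.
  rewrite !rmorphM /= h1 mulrNN mulrACA ss; done.
have h3 := intr_inj h2.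
have m0 := @int_sqrt2 m n h3.
split=> //; move: h3; rewrite m0 !mul0r.
by move/eqP; rewrite mulf_eq0 orbb => /eqP.
Qed.

Lemma keyw (A B : R) : (A + B / s) * s^-1 = A / s + B / 2.
Proof.
have -> : (A + B / s) * s^-1 = A / s + B / (s * s) by field; rewrite s_neq0.
by rewrite ss.
Qed.

Lemma comb (X Y k : R) : X = Y -> k * (X - Y) = 0.
Proof. by move=> ->; rewrite subrr mulr0. Qed.

Lemma modz2 (x y k : int) : x - y = k * 2 -> (x = y %[mod 2])%Z.
Proof. move=> h; have -> : x = k * 2 + y by rewrite -h subrK. by rewrite modzMDl. Qed.

End S.

Theorem lemma5p31 (R : rcfType) (G : 'M[R]_2) :
  grid_operator G <->
  exists a b c d a' b' c' d' : int,
    [/\ G 0 0 = a%:~R + a'%:~R / Num.sqrt 2,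
         G 0 1 = b%:~R + b'%:~R / Num.sqrt 2,
         G 1 0 = c%:~R + c'%:~R / Num.sqrt 2 &
         G 1 1 = d%:~R + d'%:~R / Num.sqrt 2] /\
    [/\ (a + b + c + d = 0 %[mod 2])%Z,
         (a' = b' %[mod 2])%Z,
         (b' = c' %[mod 2])%Z &
         (c' = d' %[mod 2])%Z].
Proof.
split.
  move=> H.
  have /H /inZ [a0 [a1 [a2 [a3 [ha hc]]]]] : in_Zomega (\col_(k < 2) (if k == 0 :> nat then 1 else 0) : 'cV[R]_2).
    by apply/inZ; exists 1, 0, 0, 0; rewrite !mxE /=; split; ring.
  have /H /inZ [b0 [b1 [b2 [b3 [hb hd]]]]] : in_Zomega (\col_(k < 2) (if k == 0 :> nat then 0 else 1) : 'cV[R]_2).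
    by apply/inZ; exists 0, 0, 1, 0; rewrite !mxE /=; split; ring.
  have /H /inZ [c0 [c1 [c2 [c3 [he hf]]]]] : in_Zomega (\col_(k < 2) (if k == 0 :> nat then (Num.sqrt (2:R))^-1 else (Num.sqrt 2)^-1) : 'cV[R]_2).
    by apply/inZ; exists 0, 1, 0, 0; rewrite !mxE /=; split; ring.
  rewrite !mulmx2 !mxE /= in ha hb hc hd he hf.
  rewrite !mulr1 !mulr0 !addr0 in ha hc.
  rewrite !mulr1 !mulr0 !add0r in hb hd.
  rewrite ha hb !keyw in he.
  rewrite hc hd !keyw in hf.
  have /irr [E1 E2] : (a1 - a3 + (b1 - b3) - 2 * c0)%:~R + (2 * (a0 + b0) - 2 * (c1 - c3))%:~R / Num.sqrt 2 = 0 :> R.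
    by apply: (eq_trans _ (@comb R _ _ 2 he)); field; rewrite s_neq0.
  have /irr [E3 E4] : (a1 + a3 + (b1 + b3) - 2 * c2)%:~R + (2 * (a2 + b2) - 2 * (c1 + c3))%:~R / Num.sqrt 2 = 0 :> R.
    by apply: (eq_trans _ (@comb R _ _ 2 hf)); field; rewrite s_neq0.
  exists a0, b0, a2, b2, (a1 - a3), (b1 - b3), (a1 + a3), (b1 + b3).
  split; first by split.
  split; apply: modz2.
  - by instantiate (1 := c1); lia.
  - by instantiate (1 := c0 - (b1 - b3)); lia.
  - by instantiate (1 := b1 - c2); lia.
  - by instantiate (1 := c2 - (b1 + b3)); lia.
case=> a [b [c [d [a' [b' [c' [d' [[h00 h01 h10 h11] [m1 m2 m3 m4]]]]]]]]].
have [t1 e1] : exists t, a' = d' + 2 * t by exists (divz a' 2 - divz d' 2); lia.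
have [t2 e2] : exists t, b' = d' + 2 * t by exists (divz b' 2 - divz d' 2); lia.
have [t3 e3] : exists t, c' = d' + 2 * t by exists (divz c' 2 - divz d' 2); lia.
have [t4 e4] : exists t, a = 2 * t - b - c - d by exists (divz (a + b + c + d) 2); lia.
move=> v /inZ [x0 [x1 [x2 [x3 [hv0 hv1]]]]]; apply/inZ.
rewrite !mulmx2 h00 h01 h10 h11 hv0 hv1 !mulS e1 e2 e3 e4.
pose p := x1 - x3; pose q := x1 + x3.
pose y1 := (d' + t1 + t3) * x0 + (d' + t2) * x2 + t4 * p + (b + d) * x3.
pose P := (d' + 2 * t1) * x0 + (2 * t4 - b - c - d) * p + (d' + 2 * t2) * x2 + b * q.
exists ((2 * t4 - b - c - d) * x0 + b * x2 + d' * x1 + t1 * p + t2 * q), y1,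
  (c * x0 + d * x2 + d' * x1 + t3 * p), (y1 - P).
rewrite /y1 /P /p /q.
split; field; rewrite ?s_neq0 //.
Qed.
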